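(* For any finite simple graph $X$ and any update sequence $\pi\in S_X$, the increasing extended threshold SDS map $\mathbf{F}^\uparrow_\pi$ has no periodic orbit of length $\ge 2$, and the increasing extended threshold GCA map $\mathbf{F}^\uparrow$ has no periodic orbit of length $\ge 3$.
   Context: Let $X$ be a finite simple graph with vertices $1,\dots,n$; $d(v)$ is the degree of $v$ and $n[v]$ the closed neighborhood of $v$. An extended vertex state is $s_v=(x_v,k_v)\in\{0,1\}\times\{1,\dots,d(v)+1\}$, and $\mathcal{S}$ is the product of these sets. Let $\sigma(x[v])=|\{u\in n[v]:x_u=1\}|$. The increasing vertex function maps $(x_v,k_v)$ to $(x_v',k_v')$ with $x_v'=1$ iff $\sigma(x[v])\ge k_v$, and $k_v'=k_v+1$ if $x_v=0$ and $\sigma(x[v])\ge k_v$, else $k_v'=k_v$. The local map $F^\uparrow_v$ updates only coordinate $v$ by this rule. For a permutation $\pi=(\pi_1,\dots,\pi_n)$ of the vertices, $\mathbf{F}^\uparrow_\pi=F^\uparrow_{\pi_n}\circ\cdots\circ F^\uparrow_{\pi_1}$; $\mathbf{F}^\uparrow$ applies the vertex function at all vertices simultaneously. A periodic orbit of length $m$ is a cycle of $m$ distinct states under iteration of the map. *)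

(* Defs.v *)
From mathcomp Require Import all_boot.
Set Implicit Arguments. Unset Strict Implicit. Unset Printing Implicit Defensive.

(* A finite simple graph: vertex type T (finite), edge relation e that is
   symmetric and irreflexive (hypotheses of the theorem). *)

Section ExtThreshold.
Variables (T : finType) (e : rel T).

Definition deg (v : T) : nat := #|[set u | e v u]|.

Definition cnbhd (v : T) : {set T} := [set u | (u == v) || e v u].

(* extended states: each vertex carries (x_v, k_v) *)
Definition state := {ffun T -> bool * nat}.

Definition in_S (s : state) : Prop :=
  forall v, 1 <= (s v).2 <= (deg v).+1.

Definition sigma (s : state) (v : T) : nat :=
  #|[set u in cnbhd v | (s u).1]|.

Definition vfun_up (s : state) (v : T) : bool * nat :=
  let xv := (s v).1 in
  let kv := (s v).2 in
  let fire := kv <= sigma s v in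
  (fire, if ~~ xv && fire then kv.+1 else kv).

Definition Floc_up (v : T) (s : state) : state :=
  [ffun u => if u == v then vfun_up s v else s u].

Definition SDS_up (pi : seq T) (s : state) : state :=
  foldl (fun st v => Floc_up v st) s pi.

Definition GCA_up (s : state) : state := [ffun v => vfun_up s v].

End ExtThreshold.

Definition has_periodic_orbit (T : finType) (e : rel T)
  (F : state T -> state T) (m : nat) : Prop :=
  exists s : state T,
    (forall i, i < m -> in_S e (iter i F s)) /\
    iter m F s = s /\
    (forall i j, i < m -> j < m -> i <> j -> iter i F s <> iter j F s).

(* Main.v *)
Require Import Defs.
From mathcomp Require Import all_boot.

Definition phi (p : bool * nat) : nat := (p.2).*2 + ~~ p.1.

Definition goodF {T : finType} (F : state T -> state T) : Prop :=
  forall (s : state T) (v : T), phi (s v) <= phi (F s v) /\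
              (phi (F s v) <= phi (s v) -> F s v = s v).

Lemma vfun_good (T : finType) (e : rel T) (s : state T) (v : T) :
  phi (s v) <= phi (vfun_up e s v) /\
  (phi (vfun_up e s v) <= phi (s v) -> vfun_up e s v = s v).
Proof.
rewrite /vfun_up /phi; case: (s v) => [x k] /=.
case: x; case: (k <= sigma e s v) => /=; rewrite ?doubleS;
  split => //; rewrite ?addn0 ?addn1 //.
all: by rewrite ltnn.
Qed.

Lemma Floc_good {T : finType} (e : rel T) v : goodF (@Floc_up T e v).
Proof.
move=> s u; rewrite /Floc_up ffunE; case: eqP => [->|_].
  exact: vfun_good.
by split.
Qed.

Lemma GCA_good {T : finType} (e : rel T) : goodF (@GCA_up T e).
Proof. move=> s u; rewrite /GCA_up ffunE; exact: vfun_good. Qed.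

Lemma id_good (T : finType) : goodF (@id (state T)).
Proof. by move=> s v; split. Qed.

Lemma comp_good {T : finType} (F G : state T -> state T) :
  goodF F -> goodF G -> goodF (fun s => G (F s)).
Proof.
move=> hF hG s v; have [a1 a2] := hF s v; have [b1 b2] := hG (F s) v.
split; first exact: leq_trans b1.
move=> H.
have e1 : phi (F s v) <= phi (s v) by apply: leq_trans b1 H.
have E := a2 e1. rewrite b2; first exact: E.
by rewrite E.
Qed.

Lemma SDS_good {T : finType} (e : rel T) pi : goodF (@SDS_up T e pi).
Proof.
rewrite /SDS_up.
suff : forall (H : state T -> state T), goodF H ->
   goodF (fun s => foldl (fun st v => Floc_up e v st) (H s) pi).
  by move=> /(_ id (@id_good T)).
elim: pi => [|a l IH] H hH //=.
apply: (IH (fun s => Floc_up e a (H s))).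
exact: (@comp_good T H (Floc_up e a) hH (Floc_good e a)).
Qed.

Lemma iter_mono {T : finType} F (hF : goodF F) (s : state T) v i :
  phi (F s v) <= phi (iter i.+1 F s v).
Proof.
elim: i => [|i IH] //=.
apply: leq_trans IH _; exact: (hF _ v).1.
Qed.

Lemma no_orbit (T : finType) (e : rel T) F (hF : goodF F) m :
  2 <= m -> ~ has_periodic_orbit e F m.
Proof.
move=> hm [s [_ [hper hdist]]].
have fix1 : F s = s.
  apply/ffunP => v; apply: (hF s v).2.
  have := iter_mono F hF s v m.-1.
  by rewrite prednK ?hper // (leq_trans _ hm).
apply: (hdist 1 0) => //; exact: ltnW.
Qed.

Theorem proposition3p3 (T : finType) (e : rel T)
  (e_sym : symmetric e) (e_irr : irreflexive e)
  (pi : seq T) (pi_perm : perm_eq pi (enum T)) :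
  (forall m, 2 <= m -> ~ has_periodic_orbit e (SDS_up e pi) m) /\
  (forall m, 3 <= m -> ~ has_periodic_orbit e (GCA_up e) m).
Proof.
split => m hm.
  exact: (@no_orbit T e _ (SDS_good e pi) m hm).
apply: (@no_orbit T e _ (GCA_good e)); exact: ltnW.
Qed.
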